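(* Let $T$ be a triangle which is not of type $(90^\circ,60^\circ,30^\circ)$. Then the 3-graph $F_{3,2}$ with vertex set $[5]$ and edges $123,145,245,345$ is forbidden for $T$.
   Context: A 3-graph is a 3-uniform hypergraph; $G$ is $F$-free if it has no (not necessarily induced) subhypergraph isomorphic to $F$. A triangle is of type $(\alpha,\beta,\gamma)$ if $\alpha\ge\beta\ge\gamma$ are its interior angles in degrees. For a triangle $T$ with side lengths $a,b,c$ and $\varepsilon>0$, with $\varepsilon'=\varepsilon\min\{a,b,c\}$, a triangle $A'B'C'$ is $\varepsilon$-congruent to $T$ if there are $A,B,C\in\mathbb{R}^2$ with $ABC$ congruent to $T$ and $A',B',C'$ within distance $\varepsilon'$ of $A,B,C$ respectively. For finite $P\subseteq\mathbb{R}^2$, $\mathcal{H}(T,P,\varepsilon)$ is the 3-graph on $P$ whose edges are triples forming triangles $\varepsilon$-congruent to $T$. A 3-graph $H$ is forbidden for $T$ if there exists $\varepsilon>0$ such that for every $P\subseteq\mathbb{R}^2$ with $|P|=|V(H)|$, $\mathcal{H}(T,P,\varepsilon)$ is $H$-free. *)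

(* Defs.v *)
From Stdlib Require Import Reals Lra List Permutation.
Import ListNotations.
Open Scope R_scope.

Definition point : Type := (R * R)%type.

Definition pdist (p q : point) : R :=
  sqrt ((fst p - fst q) ^ 2 + (snd p - snd q) ^ 2).

Definition collinear (A B C : point) : Prop :=
  (fst B - fst A) * (snd C - snd A) - (snd B - snd A) * (fst C - fst A) = 0.

Record plane_triangle : Type := Triangle {
  tA : point; tB : point; tC : point;
  t_nondeg : ~ collinear tA tB tC }.

Definition angle_deg (P Q S : point) : R :=
  acos (((fst P - fst Q) * (fst S - fst Q) + (snd P - snd Q) * (snd S - snd Q))
        / (pdist Q P * pdist Q S)) * 180 / PI.

Definition angA (T : plane_triangle) := angle_deg (tB T) (tA T) (tC T).
Definition angB (T : plane_triangle) := angle_deg (tA T) (tB T) (tC T).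
Definition angC (T : plane_triangle) := angle_deg (tA T) (tC T) (tB T).

Definition is_type (T : plane_triangle) (al be ga : R) : Prop :=
  al >= be /\ be >= ga /\
  Permutation [angA T; angB T; angC T] [al; be; ga].

Definition lab_congruent (A B C X Y Z : point) : Prop :=
  pdist A B = pdist X Y /\ pdist B C = pdist Y Z /\ pdist C A = pdist Z X.

Definition congruent (A B C : point) (T : plane_triangle) : Prop :=
  let X := tA T in let Y := tB T in let Z := tC T in
  lab_congruent A B C X Y Z \/ lab_congruent A B C X Z Y \/
  lab_congruent A B C Y X Z \/ lab_congruent A B C Y Z X \/
  lab_congruent A B C Z X Y \/ lab_congruent A B C Z Y X.

Definition min_side (T : plane_triangle) : R :=
  Rmin (pdist (tA T) (tB T)) (Rmin (pdist (tB T) (tC T)) (pdist (tC T) (tA T))).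

Definition eps_congruent (T : plane_triangle) (eps : R) (A' B' C' : point) : Prop :=
  let eps' := eps * min_side T in
  exists A B C : point, congruent A B C T /\
    pdist A' A <= eps' /\ pdist B' B <= eps' /\ pdist C' C <= eps'.

(** A 3-graph on the vertex set {0,...,n-1} given by a list of edges
    (each edge is a triple of distinct vertices < n). *)
Record hgraph3 : Type := HGraph3 {
  hg_n : nat;
  hg_edges : list (nat * nat * nat) }.

Definition HTP_edge (T : plane_triangle) (P : list point) (eps : R) (x y z : point) : Prop :=
  In x P /\ In y P /\ In z P /\ x <> y /\ y <> z /\ x <> z /\
  eps_congruent T eps x y z.

Definition HTP_contains (T : plane_triangle) (P : list point) (eps : R) (H : hgraph3) : Prop :=
  exists f : nat -> point,
    (forall i, (i < hg_n H)%nat -> In (f i) P) /\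
    (forall i j, (i < hg_n H)%nat -> (j < hg_n H)%nat -> f i = f j -> i = j) /\
    (forall i j k, In (i, j, k) (hg_edges H) -> HTP_edge T P eps (f i) (f j) (f k)).

Definition HTP_free (T : plane_triangle) (P : list point) (eps : R) (H : hgraph3) : Prop :=
  ~ HTP_contains T P eps H.

Definition forbidden (H : hgraph3) (T : plane_triangle) : Prop :=
  exists eps : R, eps > 0 /\
    forall P : list point, NoDup P -> length P = hg_n H ->
      HTP_free T P eps H.

(** F_{3,2}: vertex set [5] = {1,...,5} (encoded as 0..4), edges 123,145,245,345 *)
Definition F32 : hgraph3 :=
  HGraph3 5 [(0,1,2); (0,3,4); (1,3,4); (2,3,4)]%nat.

(* Main.v *)
Require Import Defs.
From Stdlib Require Import Reals Lra Psatz List Bool Rgeom Permutation.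
Import ListNotations.
Open Scope R_scope.


Definition perm3 (x y z a b c : R) : Prop :=
 (x=a/\y=b/\z=c) \/ (x=a/\y=c/\z=b) \/ (x=b/\y=a/\z=c) \/
 (x=b/\y=c/\z=a) \/ (x=c/\y=a/\z=b) \/ (x=c/\y=b/\z=a).

Ltac pick := first [ (left; repeat split; reflexivity) | (right; pick) | (repeat split; reflexivity) ].
Ltac dperm := repeat match goal with H : _ \/ _ |- _ => destruct H | H : _ /\ _ |- _ => destruct H end; subst.

Lemma perm3_trans x y z a b c u v w : perm3 x y z a b c -> perm3 a b c u v w -> perm3 x y z u v w.
Proof. unfold perm3; intros H1 H2; dperm; pick. Qed.
Lemma perm3_refl a b c : perm3 a b c a b c. Proof. unfold perm3; pick. Qed.
Lemma perm3_sym x y z a b c : perm3 x y z a b c -> perm3 a b c x y z.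
Proof. unfold perm3; intros H1; dperm; pick. Qed.
Lemma perm3_rot x y z a b c : perm3 x y z a b c -> perm3 y z x a b c.
Proof. unfold perm3; intros H1; dperm; pick. Qed.
Lemma perm3_sw23 x y z a b c : perm3 x y z a b c -> perm3 x z y a b c.
Proof. unfold perm3; intros H1; dperm; pick. Qed.

Definition Kf (a b c : R) := 2*a^2*b^2 + 2*b^2*c^2 + 2*c^2*a^2 - a^4 - b^4 - c^4.

Lemma perm3_K x y z a b c : perm3 x y z a b c -> Kf x y z = Kf a b c.
Proof. unfold perm3, Kf; intros H1; dperm; ring. Qed.

Lemma perm3_pos x y z a b c : perm3 x y z a b c -> 0<a -> 0<b -> 0<c -> 0<x /\ 0<y /\ 0<z.
Proof. unfold perm3; intros H1; dperm; auto. Qed.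

Lemma perm3_in x y z a b c : perm3 x y z a b c -> (x = a \/ x = b \/ x = c).
Proof. unfold perm3; intros H1; dperm; auto. Qed.

Lemma perm3_compl q s r q' r' a b c : perm3 q s r a b c -> perm3 q' s r' a b c ->
  (q' = q /\ r' = r) \/ (q' = r /\ r' = q).
Proof. unfold perm3; intros H1 H2; dperm; auto. Qed.

Definition Rtri (a b c : R) : Prop := exists h l s, perm3 h l s a b c /\ h = 2*s /\ h^2 = l^2 + s^2.

Lemma Rtri_perm x y z a b c : perm3 x y z a b c -> Rtri x y z -> Rtri a b c.
Proof. intros H [h [l [s [Hp [H1 H2]]]]]. exists h, l, s; split; auto. eapply perm3_trans; eauto. Qed.


Lemma core0 s q r x y w : 0<s -> 0<q -> 0<r -> perm3 x y w s q r ->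
  s^2*x^2 = (q^2-r^2)^2 -> s^2*y^2 = Kf s q r -> s^2*w^2 = (q^2-r^2)^2 + Kf s q r ->
  Rtri s q r.
Proof.
  intros hs hq hr hp e1 e2 e3.
  assert (hw : w^2 = 2*q^2+2*r^2-s^2).
  { apply (Rmult_eq_reg_l (s^2)); [|nra]. rewrite e3; unfold Kf; ring. }
  assert (q2 : 0 < q^2) by nra. assert (r2 : 0 < r^2) by nra.
  unfold perm3 in hp; dperm.
  - exfalso. assert (h: s^2 = 2*q^2+r^2) by lra.
    assert (s^2*s^2 = (2*q^2+r^2)^2) by (rewrite h; ring).
    assert ((2*q^2+r^2)^2 - (q^2-r^2)^2 = 3*q^2*(q^2+2*r^2)) by ring.
    assert (0 < q^2*(q^2+2*r^2)) by (apply Rmult_lt_0_compat; lra). lra.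
  - exfalso. assert (h: s^2 = q^2+2*r^2) by lra.
    assert (s^2*s^2 = (q^2+2*r^2)^2) by (rewrite h; ring).
    assert ((q^2+2*r^2)^2 - (q^2-r^2)^2 = 3*r^2*(2*q^2+r^2)) by ring.
    assert (0 < r^2*(2*q^2+r^2)) by (apply Rmult_lt_0_compat; lra). lra.
  - exfalso. assert (h: s^2 = 2*q^2+r^2) by lra. unfold Kf in e2.
    assert (h2: s^4 = s^2*s^2) by ring. rewrite h2 in e2.
    assert (h3: 2 * s ^ 2 * q ^ 2 + 2 * q ^ 2 * r ^ 2 + 2 * r ^ 2 * s ^ 2 - s ^ 2 * s ^ 2 - q ^ 4 - r ^ 4
      = 2 * (2*q^2+r^2) * q ^ 2 + 2 * q ^ 2 * r ^ 2 + 2 * r ^ 2 * (2*q^2+r^2) - (2*q^2+r^2) * (2*q^2+r^2) - q ^ 4 - r ^ 4) by (rewrite h; ring).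
    rewrite h3, h in e2. assert (5*q^4 + r^4 = 0) by nra.
    assert (0 < q^4) by nra. assert (0 < r^4) by nra. lra.
  - assert (s^2 = q^2+r^2) by lra.
    assert (hk : Kf s q r = 4*q^2*r^2) by (unfold Kf; nra).
    rewrite hk in e2. assert (s^2 = 4*q^2) by nra.
    assert (s = 2*q) by nra.
    exists s, r, q. split; [unfold perm3; pick|]. split; lra.
  - exfalso. assert (h: s^2 = q^2+2*r^2) by lra. unfold Kf in e2.
    assert (h2: s^4 = s^2*s^2) by ring. rewrite h2 in e2.
    assert (h3: 2 * s ^ 2 * q ^ 2 + 2 * q ^ 2 * r ^ 2 + 2 * r ^ 2 * s ^ 2 - s ^ 2 * s ^ 2 - q ^ 4 - r ^ 4
      = 2 * (q^2+2*r^2) * q ^ 2 + 2 * q ^ 2 * r ^ 2 + 2 * r ^ 2 * (q^2+2*r^2) - (q^2+2*r^2) * (q^2+2*r^2) - q ^ 4 - r ^ 4) by (rewrite h; ring).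
    rewrite h3, h in e2. assert (q^4 + 5*r^4 = 0) by nra.
    assert (0 < q^4) by nra. assert (0 < r^4) by nra. lra.
  - assert (s^2 = q^2+r^2) by lra.
    assert (hk : Kf s q r = 4*q^2*r^2) by (unfold Kf; nra).
    rewrite hk in e2. assert (s^2 = 4*r^2) by nra.
    assert (s = 2*r) by nra.
    exists s, q, r. split; [apply perm3_refl|]. split; lra.
Qed.


Lemma perm3_sw12 x y z a b c : perm3 x y z a b c -> perm3 y x z a b c.
Proof. unfold perm3; intros H1; dperm; pick. Qed.

Lemma core a b c q s r x y w : 0<a -> 0<b -> 0<c -> perm3 q s r a b c -> perm3 x y w a b c ->
  s^2*x^2 = (q^2-r^2)^2 -> s^2*y^2 = Kf a b c -> s^2*w^2 = (q^2-r^2)^2 + Kf a b c ->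
  Rtri a b c.
Proof.
  intros ha hb hc hp hx e1 e2 e3.
  assert (hp' : perm3 s q r a b c) by (apply perm3_sw12; auto).
  assert (hK : Kf s q r = Kf a b c) by (apply perm3_K; auto).
  destruct (perm3_pos _ _ _ _ _ _ hp' ha hb hc) as [hs [hq hr]].
  apply (Rtri_perm s q r); auto.
  apply (core0 s q r x y w); auto.
  - eapply perm3_trans; [exact hx| apply perm3_sym; exact hp'].
  - rewrite hK; auto.
  - rewrite hK; auto.
Qed.

Lemma two_same a b c q s r zi zj zk u v w : 0<a -> 0<b -> 0<c -> perm3 q s r a b c ->
  (zi = q^2-r^2 \/ zi = -(q^2-r^2)) -> (zj = q^2-r^2 \/ zj = -(q^2-r^2)) ->
  (zk = q^2-r^2 \/ zk = -(q^2-r^2)) -> perm3 u v w a b c ->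
  4*s^2*u^2 = (zi-zj)^2 -> 4*s^2*v^2 = (zj-zk)^2 + 4*Kf a b c ->
  4*s^2*w^2 = (zk-zi)^2 + 4*Kf a b c -> Rtri a b c.
Proof.
  intros ha hb hc hp hi hj hk hu e1 e2 e3.
  destruct (perm3_pos _ _ _ _ _ _ hp ha hb hc) as [hq [hs hr]].
  destruct (perm3_pos _ _ _ _ _ _ hu ha hb hc) as [hu0 [hv0 hw0]].
  assert (pos : 0 < 4*s^2*u^2) by (apply Rmult_lt_0_compat; [nra| nra]).
  set (z := q^2-r^2) in *.
  assert (hji : zj = - zi).
  { destruct hi as [hi|hi]; destruct hj as [hj|hj]; rewrite hi, hj in e1 |- *;
    try (exfalso; replace ((z - z)^2) with 0 in e1 by ring; lra);
    try (exfalso; replace ((-z - -z)^2) with 0 in e1 by ring; lra); ring. }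
  assert (hz2 : zi^2 = z^2) by (destruct hi as [hi|hi]; rewrite hi; ring).
  assert (hkk : zk = zi \/ zk = zj).
  { rewrite hji. destruct hi as [hi|hi]; destruct hk as [hk|hk]; rewrite hi, hk; 
    first [left; ring | right; ring]. }
  destruct hkk as [hkk|hkk]; rewrite hkk, hji in *.
  - apply (core a b c q s r u w v); auto.
    + apply perm3_sw23; auto.
    + fold z. replace ((-zi - zi)^2) with (4*zi^2) in e1 by ring. nra.
    + replace ((zi - zi)^2) with 0 in e3 by ring. nra.
    + fold z. replace ((-zi - zi)^2) with (4*zi^2) in e2 by ring. nra.
  - apply (core a b c q s r u v w); auto.
    + fold z. replace ((zi - -zi)^2) with (4*zi^2) in e1 by ring. nra.
    + replace ((-zi - -zi)^2) with 0 in e2 by ring. nra.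
    + fold z. replace ((-zi - zi)^2) with (4*zi^2) in e3 by ring. nra.
Qed.


Lemma sq_inj_pos x y : 0 < x -> 0 < y -> x^2 = y^2 -> x = y.
Proof. intros; nra. Qed.

Lemma exact_all a b c q1 s1 r1 q2 s2 r2 q3 s3 r3 x1 x2 x3 (b1 b2 b3 : bool) :
  0<a -> 0<b -> 0<c -> perm3 q1 s1 r1 a b c -> perm3 q2 s2 r2 a b c -> perm3 q3 s3 r3 a b c ->
  perm3 x1 x2 x3 a b c -> s1^2 = s2^2 -> s1^2 = s3^2 ->
  4*s1^2*x1^2 = ((q1^2-r1^2) - (q2^2-r2^2))^2 + (if eqb b1 b2 then 0 else 4*Kf a b c) ->
  4*s1^2*x2^2 = ((q2^2-r2^2) - (q3^2-r3^2))^2 + (if eqb b2 b3 then 0 else 4*Kf a b c) ->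
  4*s1^2*x3^2 = ((q3^2-r3^2) - (q1^2-r1^2))^2 + (if eqb b3 b1 then 0 else 4*Kf a b c) ->
  Rtri a b c.
Proof.
  intros ha hb hc p1 p2 p3 px e12 e13 E1 E2 E3.
  destruct (perm3_pos _ _ _ _ _ _ p1 ha hb hc) as [_ [h1 _]].
  destruct (perm3_pos _ _ _ _ _ _ p2 ha hb hc) as [_ [h2 _]].
  destruct (perm3_pos _ _ _ _ _ _ p3 ha hb hc) as [_ [h3 _]].
  destruct (perm3_pos _ _ _ _ _ _ px ha hb hc) as [hx1 [hx2 hx3]].
  assert (s2 = s1) by (symmetry; apply sq_inj_pos; auto).
  assert (s3 = s1) by (symmetry; apply sq_inj_pos; auto). subst s2 s3.
  assert (z1 : (q1^2-r1^2) = q1^2-r1^2 \/ (q1^2-r1^2) = -(q1^2-r1^2)) by (left; ring).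
  assert (z2 : (q2^2-r2^2) = q1^2-r1^2 \/ (q2^2-r2^2) = -(q1^2-r1^2)).
  { destruct (perm3_compl _ _ _ _ _ _ _ _ p1 p2) as [[-> ->]|[-> ->]]; [left|right]; ring. }
  assert (z3 : (q3^2-r3^2) = q1^2-r1^2 \/ (q3^2-r3^2) = -(q1^2-r1^2)).
  { destruct (perm3_compl _ _ _ _ _ _ _ _ p1 p3) as [[-> ->]|[-> ->]]; [left|right]; ring. }
  set (w1 := q1^2-r1^2) in *. set (w2 := q2^2-r2^2) in *. set (w3 := q3^2-r3^2) in *.
  assert (P1 : 0 < 4*s1^2*x1^2) by (apply Rmult_lt_0_compat; nra).
  assert (P2 : 0 < 4*s1^2*x2^2) by (apply Rmult_lt_0_compat; nra).
  assert (P3 : 0 < 4*s1^2*x3^2) by (apply Rmult_lt_0_compat; nra).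
  destruct b1, b2, b3; cbn [eqb] in E1, E2, E3; rewrite ?Rplus_0_r in E1, E2, E3.
  - exfalso. destruct z2 as [z2|z2]; destruct z3 as [z3|z3]; rewrite ?z2, ?z3 in *; nra.
  - apply (two_same a b c q1 s1 r1 w1 w2 w3 x1 x2 x3); auto; try lra.
  - apply (two_same a b c q1 s1 r1 w3 w1 w2 x3 x1 x2); auto; try lra.
    do 2 apply perm3_rot; auto; try lra.
  - apply (two_same a b c q1 s1 r1 w2 w3 w1 x2 x3 x1); auto; try lra.
    apply perm3_rot; auto; try lra.
  - apply (two_same a b c q1 s1 r1 w2 w3 w1 x2 x3 x1); auto; try lra.
    apply perm3_rot; auto; try lra.
  - apply (two_same a b c q1 s1 r1 w3 w1 w2 x3 x1 x2); auto; try lra.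
    do 2 apply perm3_rot; auto; try lra.
  - apply (two_same a b c q1 s1 r1 w1 w2 w3 x1 x2 x3); auto; try lra.
  - exfalso. destruct z2 as [z2|z2]; destruct z3 as [z3|z3]; rewrite ?z2, ?z3 in *; nra.
Qed.


Definition close (x y d : R) := -d <= x - y <= d.

Lemma prod_bound x y X Y : -X <= x <= X -> -Y <= y <= Y -> -(X*Y) <= x*y <= X*Y.
Proof. intros; split; nra. Qed.

Lemma Ysq_err t1 t2 t3 D W V Y d N : 0 <= t1 <= N -> 0 <= t2 <= N -> 0 <= t3 <= N -> 1 <= N ->
  0 <= d <= 1 -> close D t1 d -> close W t2 d -> close V t3 d ->
  4*Y^2 = 4*D*W - (D+W-V)^2 ->
  close (Y^2) ((4*t1*t2 - (t1+t2-t3)^2)/4) (9*N*d).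
Proof.
  unfold close; intros h1 h2 h3 hN hd hD hW hV hY.
  set (d1 := D - t1) in *. set (d2 := W - t2) in *. set (d3 := V - t3) in *.
  replace D with (t1+d1) in hY by (unfold d1; ring).
  replace W with (t2+d2) in hY by (unfold d2; ring).
  replace V with (t3+d3) in hY by (unfold d3; ring).
  assert (b1 := prod_bound t1 d2 N d ltac:(lra) ltac:(lra)).
  assert (b2 := prod_bound t2 d1 N d ltac:(lra) ltac:(lra)).
  assert (b3 := prod_bound d1 d2 d d ltac:(lra) ltac:(lra)).
  assert (b4 := prod_bound (t1+t2-t3) (d1+d2-d3) (2*N) (3*d) ltac:(lra) ltac:(lra)).
  assert (b5 := prod_bound (d1+d2-d3) (d1+d2-d3) (3*d) (3*d) ltac:(lra) ltac:(lra)).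
  assert (d*d <= d) by nra. assert (d <= N*d) by nra. assert (0 <= N * d) by nra.
  split; nra.
Qed.

Lemma YY_err k P A B E : 0 < k -> 0 <= P -> 0 <= E -> close A k E -> close B k E -> P^2 = A*B ->
  close P k (E*(2*k+E)/k).
Proof.
  unfold close; intros hk hP hE hA hB hPAB.
  assert (h1 : -(E*(2*k+E)) <= P^2 - k^2 <= E*(2*k+E)).
  { rewrite hPAB. replace (A*B - k^2) with ((A-k)*(B-k) + k*(A-k) + k*(B-k)) by ring.
    assert (b1 := prod_bound (A-k) (B-k) E E hA hB). 
    assert (b2 := prod_bound k (A-k) k E ltac:(lra) hA).
    assert (b3 := prod_bound k (B-k) k E ltac:(lra) hB). split; nra. }
  assert (h2 : P^2 - k^2 = (P-k)*(P+k)) by ring.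
  assert (0 <= E*(2*k+E)) by nra.
  split.
  - apply (Rmult_le_reg_r k); [lra|]. unfold Rdiv. rewrite Ropp_mult_distr_l_reverse.
    rewrite Rmult_assoc, Rinv_l by lra. nra.
  - apply (Rmult_le_reg_r k); [lra|]. unfold Rdiv.
    rewrite Rmult_assoc, Rinv_l by lra. nra.
Qed.


Lemma pair_err N k c2 d s x D Q Wi Vi Wj Vj qi ri qj rj Yi Yj (same : bool) :
 1 <= N -> 0 < k -> 0 <= d <= 1 ->
 0 <= s^2 <= N -> 0 <= x^2 <= N -> 0 <= qi^2 <= N -> 0 <= ri^2 <= N -> 0 <= qj^2 <= N -> 0 <= rj^2 <= N ->
 close D (s^2) d -> close Q (x^2) d -> close Wi (qi^2) d -> close Vi (ri^2) d ->
 close Wj (qj^2) d -> close Vj (rj^2) d ->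
 close (Yi^2) k (9*N*d) -> close (Yj^2) k (9*N*d) ->
 c2 = 9*N*(2*k+9*N)/k ->
 (same = true -> 0 <= Yi*Yj) -> (same = false -> Yi*Yj <= 0) ->
 4*D*Q = ((Wi-Vi)-(Wj-Vj))^2 + 4*(Yi-Yj)^2 ->
 Rabs (4*s^2*x^2 - ((qi^2-ri^2)-(qj^2-rj^2))^2 - (if same then 0 else 4*(4*k))) <= (116*N + 8*c2)*d.
Proof.
  unfold close; intros hN hk hd hs hx hqi hri hqj hrj hD hQ hWi hVi hWj hVj hYi hYj hc2 hsame hopp hid.
  assert (hc2d : 9*N*d*(2*k+9*N*d)/k <= c2*d).
  { rewrite hc2. unfold Rdiv. 
    assert (0 < /k) by (apply Rinv_0_lt_compat; lra).
    assert (d*d <= d) by nra.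
    assert (N*N*(d*d) <= N*N*d) by (apply Rmult_le_compat_l; nra).
    assert (9*N*d*(2*k+9*N*d) <= 9*N*(2*k+9*N)*d) by lra.
    replace (9 * N * (2 * k + 9 * N) * / k * d) with ((9 * N * (2 * k + 9 * N) * d) * / k) by ring.
    apply Rmult_le_compat_r; lra. }
  assert (hA : -(12*N*d) <= 4*D*Q - 4*s^2*x^2 <= 12*N*d).
  { replace (4*D*Q - 4*s^2*x^2) with (4*((D - s^2)*(Q-x^2) + s^2*(Q-x^2) + x^2*(D-s^2))) by ring.
    assert (b1 := prod_bound (D-s^2) (Q-x^2) d d hD hQ).
    assert (b2 := prod_bound (s^2) (Q-x^2) N d ltac:(lra) hQ).
    assert (b3 := prod_bound (x^2) (D-s^2) N d ltac:(lra) hD).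
    assert (d*d <= d) by nra. assert (d <= N*d) by nra. lra. }
  assert (hB : -(32*N*d) <= ((Wi-Vi)-(Wj-Vj))^2 - ((qi^2-ri^2)-(qj^2-rj^2))^2 <= 32*N*d).
  { set (z := (qi^2-ri^2)-(qj^2-rj^2)).
    set (e := ((Wi-Vi)-(Wj-Vj)) - z).
    replace ((Wi-Vi)-(Wj-Vj)) with (z+e) by (unfold e; ring).
    replace ((z+e)^2 - z^2) with (2*(z*e) + e*e) by ring.
    assert (he : -(4*d) <= e <= 4*d) by (unfold e, z; lra).
    assert (b1 := prod_bound z e (2*N) (4*d) ltac:(unfold z; lra) he).
    assert (b2 := prod_bound e e (4*d) (4*d) he he).
    assert (d*d <= d) by nra. assert (d <= N*d) by nra. lra. }
  assert (hC : -(18*N*d + 2*c2*d) <= (Yi-Yj)^2 - (if same then 0 else 4*k) <= 18*N*d + 2*c2*d).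
  { assert (0 <= 9*N*d) by nra.
    destruct same.
    - assert (hP := YY_err k (Yi*Yj) (Yi^2) (Yj^2) (9*N*d) hk (hsame eq_refl) ltac:(assumption) hYi hYj ltac:(ring)).
      unfold close in hP.
      replace ((Yi-Yj)^2 - 0) with ((Yi^2 - k) + (Yj^2 - k) - 2*(Yi*Yj - k)) by ring. lra.
    - assert (hP := YY_err k (-(Yi*Yj)) (Yi^2) (Yj^2) (9*N*d) hk ltac:(specialize (hopp eq_refl); lra) ltac:(assumption) hYi hYj ltac:(ring)).
      unfold close in hP.
      replace ((Yi-Yj)^2 - 4*k) with ((Yi^2 - k) + (Yj^2 - k) + 2*(-(Yi*Yj) - k)) by ring. lra. }
  apply Rabs_le.
  destruct same; lra.
Qed.


Definition perms (a b c : R) : list (R*R*R) := [(a,b,c);(a,c,b);(b,a,c);(b,c,a);(c,a,b);(c,b,a)].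
Lemma perms_in x y z a b c : perm3 x y z a b c -> In (x,y,z) (perms a b c).
Proof. unfold perm3, perms; intros H; dperm; simpl; tauto. Qed.
Lemma perms_in' x y z a b c : In (x,y,z) (perms a b c) -> perm3 x y z a b c.
Proof. unfold perm3, perms; simpl; intros H.
  repeat destruct H as [H|H]; try (injection H; intros; subst); try pick; contradiction. Qed.

Definition bools := [true;false].
Definition Tup := ((R*R*R)*(R*R*R)*(R*R*R)*(R*R*R)*(bool*bool*bool))%type.
Definition tuples a b c : list Tup :=
  list_prod (list_prod (list_prod (list_prod (perms a b c) (perms a b c)) (perms a b c)) (perms a b c))
    (list_prod (list_prod bools bools) bools).

Definition Res a b c (t : Tup) : R :=
  match t with
  | (((((q1,s1,r1),(q2,s2,r2)),(q3,s3,r3)),(x1,x2,x3)),(b1,b2,b3)) =>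
    Rabs (s1^2 - s2^2) + Rabs (s1^2 - s3^2)
    + Rabs (4*s1^2*x1^2 - ((q1^2-r1^2) - (q2^2-r2^2))^2 - (if eqb b1 b2 then 0 else 4*Kf a b c))
    + Rabs (4*s1^2*x2^2 - ((q2^2-r2^2) - (q3^2-r3^2))^2 - (if eqb b2 b3 then 0 else 4*Kf a b c))
    + Rabs (4*s1^2*x3^2 - ((q3^2-r3^2) - (q1^2-r1^2))^2 - (if eqb b3 b1 then 0 else 4*Kf a b c))
  end.

Lemma abs0 x : Rabs x = 0 -> x = 0.
Proof. intros H. destruct (Req_dec x 0); auto. exfalso. assert (0 < Rabs x) by (apply Rabs_pos_lt; auto). lra. Qed.

Lemma Res_pos a b c t : 0<a -> 0<b -> 0<c -> ~ Rtri a b c -> In t (tuples a b c) -> 0 < Res a b c t.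
Proof.
  intros ha hb hc hR hin.
  destruct t as [[[[[[q1 s1] r1] [[q2 s2] r2]] [[q3 s3] r3]] [[x1 x2] x3]] [[b1 b2] b3]].
  unfold tuples in hin. apply in_prod_iff in hin as [hin _].
  apply in_prod_iff in hin as [hin px].
  apply in_prod_iff in hin as [hin p3].
  apply in_prod_iff in hin as [p1 p2].
  apply perms_in' in p1, p2, p3, px.
  cbv beta iota delta [Res].
  set (A1 := Rabs (s1^2 - s2^2)). set (A2 := Rabs (s1^2 - s3^2)).
  set (A3 := Rabs (4*s1^2*x1^2 - ((q1^2-r1^2) - (q2^2-r2^2))^2 - (if eqb b1 b2 then 0 else 4*Kf a b c))).
  set (A4 := Rabs (4*s1^2*x2^2 - ((q2^2-r2^2) - (q3^2-r3^2))^2 - (if eqb b2 b3 then 0 else 4*Kf a b c))).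
  set (A5 := Rabs (4*s1^2*x3^2 - ((q3^2-r3^2) - (q1^2-r1^2))^2 - (if eqb b3 b1 then 0 else 4*Kf a b c))).
  assert (0 <= A1) by apply Rabs_pos. assert (0 <= A2) by apply Rabs_pos.
  assert (0 <= A3) by apply Rabs_pos. assert (0 <= A4) by apply Rabs_pos.
  assert (0 <= A5) by apply Rabs_pos.
  destruct (Rle_lt_dec (A1+A2+A3+A4+A5) 0) as [h0|h0]; [|lra].
  exfalso. apply hR.
  assert (z1 : A1 = 0) by lra. assert (z2 : A2 = 0) by lra. assert (z3 : A3 = 0) by lra.
  assert (z4 : A4 = 0) by lra. assert (z5 : A5 = 0) by lra.
  apply abs0 in z1, z2, z3, z4, z5.
  apply (exact_all a b c q1 s1 r1 q2 s2 r2 q3 s3 r3 x1 x2 x3 b1 b2 b3); auto; lra.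
Qed.

Lemma min_list {A} (l : list A) (f : A -> R) : (forall x, In x l -> 0 < f x) ->
  exists g, 0 < g /\ forall x, In x l -> g <= f x.
Proof.
  induction l as [|y l IH]; intros H.
  - exists 1; split; [lra| intros x []].
  - destruct IH as [g [hg hl]]. { intros x hx; apply H; right; auto. }
    exists (Rmin g (f y)). split.
    + apply Rmin_pos; auto. apply H; left; auto.
    + intros x [hx|hx].
      * subst; apply Rmin_r.
      * eapply Rle_trans; [apply Rmin_l| auto].
Qed.


Definition sg (y:R) : bool := if Rle_dec 0 y then true else false.
Lemma sg_same y z : eqb (sg y) (sg z) = true -> 0 <= y*z.
Proof. unfold sg; destruct (Rle_dec 0 y); destruct (Rle_dec 0 z); simpl; intros; try discriminate; nra. Qed.
Lemma sg_diff y z : eqb (sg y) (sg z) = false -> y*z <= 0.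
Proof. unfold sg; destruct (Rle_dec 0 y); destruct (Rle_dec 0 z); simpl; intros; try discriminate; nra. Qed.

Lemma in_bools b : In b bools. Proof. destruct b; simpl; tauto. Qed.

Lemma sq_le_N a b c x : x = a \/ x = b \/ x = c -> 0 <= x^2 <= 1 + a^2 + b^2 + c^2.
Proof. intros [H|[H|H]]; subst; split; nra. Qed.

Lemma Kf_form s q r : 4*s^2*q^2 - (s^2+q^2-r^2)^2 = Kf q s r.
Proof. unfold Kf; ring. Qed.

Lemma approx_core a b c : 0<a -> 0<b -> 0<c -> 0 < Kf a b c -> ~ Rtri a b c ->
  exists d0, 0 < d0 /\ d0 <= 1 /\ forall d D W1 W2 W3 V1 V2 V3 Q1 Q2 Q3 Y1 Y2 Y3,
  0 <= d <= d0 ->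
  4*Y1^2 = 4*D*W1 - (D+W1-V1)^2 ->
  4*Y2^2 = 4*D*W2 - (D+W2-V2)^2 ->
  4*Y3^2 = 4*D*W3 - (D+W3-V3)^2 ->
  4*D*Q1 = ((W1-V1)-(W2-V2))^2 + 4*(Y1-Y2)^2 ->
  4*D*Q2 = ((W2-V2)-(W3-V3))^2 + 4*(Y2-Y3)^2 ->
  4*D*Q3 = ((W3-V3)-(W1-V1))^2 + 4*(Y3-Y1)^2 ->
  (exists q s r, perm3 q s r a b c /\ close W1 (q^2) d /\ close D (s^2) d /\ close V1 (r^2) d) ->
  (exists q s r, perm3 q s r a b c /\ close W2 (q^2) d /\ close D (s^2) d /\ close V2 (r^2) d) ->
  (exists q s r, perm3 q s r a b c /\ close W3 (q^2) d /\ close D (s^2) d /\ close V3 (r^2) d) ->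
  (exists x y w, perm3 x y w a b c /\ close Q1 (x^2) d /\ close Q2 (y^2) d /\ close Q3 (w^2) d) ->
  False.
Proof.
  intros ha hb hc hK hR.
  destruct (min_list (tuples a b c) (Res a b c) (fun t h => Res_pos a b c t ha hb hc hR h)) as [g [hg hmin]].
  set (N := 1 + a^2+b^2+c^2). set (k := Kf a b c / 4).
  set (c2 := 9*N*(2*k+9*N)/k). set (C := 400*N + 24*c2).
  assert (hN : 1 <= N) by (unfold N; nra).
  assert (hk : 0 < k) by (unfold k; lra).
  assert (hc2 : 0 < c2) by (unfold c2; apply Rdiv_lt_0_compat; nra).
  assert (hC : 0 < C) by (unfold C; lra).
  exists (Rmin 1 (g/(2*C))). split; [apply Rmin_pos; [lra| apply Rdiv_lt_0_compat; lra]|].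
  split; [apply Rmin_l|].
  intros d D W1 W2 W3 V1 V2 V3 Q1 Q2 Q3 Y1 Y2 Y3 hd eY1 eY2 eY3 eQ1 eQ2 eQ3
    [q1 [s1 [r1 [p1 [cW1 [cD1 cV1]]]]]] [q2 [s2 [r2 [p2 [cW2 [cD2 cV2]]]]]]
    [q3 [s3 [r3 [p3 [cW3 [cD3 cV3]]]]]] [x1 [x2 [x3 [px [cQ1 [cQ2 cQ3]]]]]].
  assert (hd1 : 0 <= d <= 1) by (pose proof (Rmin_l 1 (g/(2*C))); lra).
  assert (hdg : d <= g/(2*C)) by (pose proof (Rmin_r 1 (g/(2*C))); lra).
  set (t := (((((q1,s1,r1),(q2,s2,r2)),(q3,s3,r3)),(x1,x2,x3)),(sg Y1, sg Y2, sg Y3)) : Tup).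
  assert (hin : In t (tuples a b c)).
  { unfold t, tuples. apply in_prod; [|apply in_prod; [apply in_prod|]; apply in_bools].
    apply in_prod; [|apply perms_in; auto]. apply in_prod; [|apply perms_in; auto].
    apply in_prod; apply perms_in; auto. }
  assert (hg1 := hmin t hin).

  assert (B : forall x y z, perm3 x y z a b c -> 0 <= x^2 <= N /\ 0 <= y^2 <= N /\ 0 <= z^2 <= N).
  { intros x y z hp. split; [apply sq_le_N; eapply perm3_in; eauto|].
    split; apply sq_le_N; eapply perm3_in.
    - apply perm3_rot. eauto.
    - apply perm3_rot, perm3_rot. eauto. }
  destruct (B _ _ _ p1) as [bq1 [bs1 br1]].
  destruct (B _ _ _ p2) as [bq2 [bs2 br2]].
  destruct (B _ _ _ p3) as [bq3 [bs3 br3]].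
  destruct (B _ _ _ px) as [bx1 [bx2 bx3]].
  assert (Yc : forall q s r W V Y, perm3 q s r a b c -> close W (q^2) d -> close D (s^2) d -> close V (r^2) d ->
     4*Y^2 = 4*D*W - (D+W-V)^2 -> close (Y^2) k (9*N*d)).
  { intros q s r W V Y hp hW hD hV hY.
    destruct (B _ _ _ hp) as [bq [bs br]].
    assert (h := Ysq_err (s^2) (q^2) (r^2) D W V Y d N bs bq br hN hd1 hD hW hV hY).
    rewrite Kf_form, (perm3_K _ _ _ _ _ _ hp) in h. exact h. }
  assert (cY1 := Yc _ _ _ _ _ _ p1 cW1 cD1 cV1 eY1).
  assert (cY2 := Yc _ _ _ _ _ _ p2 cW2 cD2 cV2 eY2).
  assert (cY3 := Yc _ _ _ _ _ _ p3 cW3 cD3 cV3 eY3).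
  assert (h4K : 4 * Kf a b c = 4*(4*k)) by (unfold k; field).
  assert (T1 := pair_err N k c2 d s1 x1 D Q1 W1 V1 W2 V2 q1 r1 q2 r2 Y1 Y2 (eqb (sg Y1) (sg Y2))
     hN hk hd1 bs1 bx1 bq1 br1 bq2 br2 cD1 cQ1 cW1 cV1 cW2 cV2 cY1 cY2 eq_refl (sg_same Y1 Y2) (sg_diff Y1 Y2) eQ1).
  assert (T2 := pair_err N k c2 d s1 x2 D Q2 W2 V2 W3 V3 q2 r2 q3 r3 Y2 Y3 (eqb (sg Y2) (sg Y3))
     hN hk hd1 bs1 bx2 bq2 br2 bq3 br3 cD1 cQ2 cW2 cV2 cW3 cV3 cY2 cY3 eq_refl (sg_same Y2 Y3) (sg_diff Y2 Y3) eQ2).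
  assert (T3 := pair_err N k c2 d s1 x3 D Q3 W3 V3 W1 V1 q3 r3 q1 r1 Y3 Y1 (eqb (sg Y3) (sg Y1))
     hN hk hd1 bs1 bx3 bq3 br3 bq1 br1 cD1 cQ3 cW3 cV3 cW1 cV1 cY3 cY1 eq_refl (sg_same Y3 Y1) (sg_diff Y3 Y1) eQ3).
  assert (S2 : Rabs (s1^2 - s2^2) <= 2*d) by (apply Rabs_le; unfold close in *; lra).
  assert (S3 : Rabs (s1^2 - s3^2) <= 2*d) by (apply Rabs_le; unfold close in *; lra).
  unfold t in hg1. cbv beta iota delta [Res] in hg1. rewrite h4K in hg1.
  assert (hCd : C*d <= g/2).
  { apply (Rmult_le_compat_l C) in hdg; [|lra].
    replace (C*(g/(2*C))) with (g/2) in hdg by (field; lra). lra. }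
  assert (C*d = 400*N*d + 24*c2*d) by (unfold C; ring).
  assert (N*d >= d) by nra. assert (0 <= c2*d) by nra.
  lra.
Qed.


Definition sqd (p q : point) : R := (fst p - fst q)^2 + (snd p - snd q)^2.

Lemma sqd_nonneg p q : 0 <= sqd p q.
Proof. unfold sqd; apply Rplus_le_le_0_compat; apply pow2_ge_0. Qed.

Lemma pdist_sq p q : (pdist p q)^2 = sqd p q.
Proof. unfold pdist. rewrite pow2_sqrt; [reflexivity| apply sqd_nonneg]. Qed.

Lemma pdist_nonneg p q : 0 <= pdist p q.
Proof. unfold pdist; apply sqrt_pos. Qed.

Lemma pdist_sym p q : pdist p q = pdist q p.
Proof. unfold pdist; f_equal; ring. Qed.

Lemma pdist_euc p q : pdist p q = dist_euc (fst p) (snd p) (fst q) (snd q).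
Proof. unfold pdist, dist_euc, Rsqr; f_equal; ring. Qed.

Lemma pdist_tri p q r : pdist p q <= pdist p r + pdist r q.
Proof. rewrite !pdist_euc. apply triangle. Qed.

Lemma close_sq x A y B e M : pdist x A <= e -> pdist y B <= e -> pdist A B <= M -> 0 <= e <= 1 ->
  close (sqd x y) ((pdist A B)^2) (4*e*(M+1)).
Proof.
  intros h1 h2 hM he.
  assert (t1 := pdist_tri x y A). assert (t2 := pdist_tri A y B).
  assert (t3 := pdist_tri A B x). assert (t4 := pdist_tri x B y).
  rewrite (pdist_sym y B) in *. rewrite (pdist_sym A x) in *.
  assert (hp := pdist_nonneg x y). assert (hs := pdist_nonneg A B).
  rewrite <- pdist_sq. unfold close.
  set (p := pdist x y) in *. set (s := pdist A B) in *.
  assert (-(2*e) <= p - s <= 2*e) by lra.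
  replace (p^2 - s^2) with ((p-s)*(p+s)) by ring.
  assert (0 <= p + s <= 2*M + 2*e) by lra.
  split; nra.
Qed.


Lemma cong_perm A B C T : congruent A B C T ->
  perm3 (pdist A B) (pdist B C) (pdist C A) (pdist (tA T) (tB T)) (pdist (tB T) (tC T)) (pdist (tC T) (tA T)).
Proof.
  unfold congruent, lab_congruent, perm3; intros H.
  repeat destruct H as [H|H]; destruct H as [e1 [e2 e3]]; rewrite e1, e2, e3;
  rewrite ?(pdist_sym (tA T) (tC T)), ?(pdist_sym (tB T) (tA T)), ?(pdist_sym (tC T) (tB T)); pick.
Qed.

Lemma epsc_close T eps x y z M : 0 <= eps * min_side T <= 1 ->
  pdist (tA T) (tB T) <= M -> pdist (tB T) (tC T) <= M -> pdist (tC T) (tA T) <= M ->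
  eps_congruent T eps x y z ->
  exists s1 s2 s3, perm3 s1 s2 s3 (pdist (tA T) (tB T)) (pdist (tB T) (tC T)) (pdist (tC T) (tA T)) /\
   close (sqd x y) (s1^2) (4*(eps * min_side T)*(M+1)) /\
   close (sqd y z) (s2^2) (4*(eps * min_side T)*(M+1)) /\
   close (sqd z x) (s3^2) (4*(eps * min_side T)*(M+1)).
Proof.
  intros he hA hB hC [A [B [C [Hc [h1 [h2 h3]]]]]].
  assert (hp := cong_perm A B C T Hc).
  exists (pdist A B), (pdist B C), (pdist C A). split; [exact hp|].
  assert (hM : forall s, s = pdist (tA T) (tB T) \/ s = pdist (tB T) (tC T) \/ s = pdist (tC T) (tA T) -> s <= M).
  { intros s [H|[H|H]]; subst; auto. }
  split; [|split]; apply close_sq; auto; apply hM; eapply perm3_in.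
  - exact hp.
  - apply perm3_rot. exact hp.
  - apply perm3_rot, perm3_rot. exact hp.
Qed.


Definition ang3 x y z := acos ((x^2+y^2-z^2)/(2*x*y)) * 180 / PI.

Lemma angle_ang3 P Q S : 0 < pdist Q P -> 0 < pdist Q S ->
  angle_deg P Q S = ang3 (pdist Q P) (pdist Q S) (pdist P S).
Proof.
  intros h1 h2. unfold angle_deg, ang3. do 3 f_equal.
  rewrite !pdist_sq. unfold sqd. field. lra.
Qed.

Lemma ang3_sym x y z : ang3 x y z = ang3 y x z.
Proof. unfold ang3. do 3 f_equal. f_equal; ring. Qed.

Lemma ang3_cos x y z t : 0 <= t <= PI -> (x^2+y^2-z^2)/(2*x*y) = cos t -> ang3 x y z = t*180/PI.
Proof. intros ht h. unfold ang3. rewrite h, acos_cos; auto. Qed.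

Lemma PIpos : 0 < PI. Proof. apply PI_RGT_0. Qed.

Lemma r3sq : sqrt 3 * sqrt 3 = 3. Proof. apply sqrt_sqrt; lra. Qed.
Lemma r3pos : 0 < sqrt 3. Proof. apply sqrt_lt_R0; lra. Qed.

Lemma a90 s : 0 < s -> ang3 s (sqrt 3 * s) (2*s) = 90.
Proof.
  intros hs. assert (h := r3sq). assert (h3 := r3pos).
  rewrite (ang3_cos _ _ _ (PI/2)).
  - field. apply Rgt_not_eq, PIpos.
  - pose proof PIpos; split; lra.
  - rewrite cos_PI2. replace (s ^ 2 + (sqrt 3 * s) ^ 2 - (2 * s) ^ 2) with 0 by nra. field.
    split; nra.
Qed.

Lemma a60 s : 0 < s -> ang3 s (2*s) (sqrt 3 * s) = 60.
Proof.
  intros hs. assert (h := r3sq). assert (h3 := r3pos).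
  rewrite (ang3_cos _ _ _ (PI/3)).
  - field. apply Rgt_not_eq, PIpos.
  - pose proof PIpos; split; lra.
  - rewrite cos_PI3. replace (s ^ 2 + (2*s) ^ 2 - (sqrt 3 * s) ^ 2) with (2*s^2) by nra. field. lra.
Qed.

Lemma a30 s : 0 < s -> ang3 (2*s) (sqrt 3 * s) s = 30.
Proof.
  intros hs. assert (h := r3sq). assert (h3 := r3pos).
  rewrite (ang3_cos _ _ _ (PI/6)).
  - field. apply Rgt_not_eq, PIpos.
  - pose proof PIpos; split; lra.
  - rewrite cos_PI6. replace ((2*s) ^ 2 + (sqrt 3 * s) ^ 2 - s ^ 2) with (6*s^2) by nra.
    field_simplify_eq; [nra| split; nra].
Qed.


Lemma a90' s : 0 < s -> ang3 (sqrt 3 * s) s (2*s) = 90.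
Proof. intros; rewrite ang3_sym; apply a90; auto. Qed.
Lemma a60' s : 0 < s -> ang3 (2*s) s (sqrt 3 * s) = 60.
Proof. intros; rewrite ang3_sym; apply a60; auto. Qed.
Lemma a30' s : 0 < s -> ang3 (sqrt 3 * s) (2*s) s = 30.
Proof. intros; rewrite ang3_sym; apply a30; auto. Qed.

Lemma pp1 (x y z : R) : Permutation [x;y;z] [x;y;z]. Proof. apply Permutation_refl. Qed.
Lemma pp2 (x y z : R) : Permutation [x;z;y] [x;y;z]. Proof. apply perm_skip, perm_swap. Qed.
Lemma pp3 (x y z : R) : Permutation [y;x;z] [x;y;z]. Proof. apply perm_swap. Qed.
Lemma pp4 (x y z : R) : Permutation [y;z;x] [x;y;z].
Proof. eapply perm_trans; [apply perm_skip, perm_swap| apply perm_swap]. Qed.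
Lemma pp5 (x y z : R) : Permutation [z;x;y] [x;y;z].
Proof. eapply perm_trans; [apply perm_swap| apply perm_skip, perm_swap]. Qed.
Lemma pp6 (x y z : R) : Permutation [z;y;x] [x;y;z].
Proof. eapply perm_trans; [apply perm_swap|]. eapply perm_trans; [apply perm_skip, perm_swap| apply perm_swap]. Qed.

Lemma type_of x y z al be ga : al = ang3 x z y -> be = ang3 x y z -> ga = ang3 z y x ->
  0 < x -> 0 < y -> 0 < z -> Rtri x y z -> Permutation [al;be;ga] [90;60;30].
Proof.
  intros e1 e2 e3 hx hy hz [h [l [s [hp [hh hl]]]]].
  assert (hs : 0 < s).
  { unfold perm3 in hp. dperm; auto. }
  assert (hl' : l = sqrt 3 * s).
  { assert (0 < l) by (unfold perm3 in hp; dperm; auto).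
    assert (l^2 = 3*s^2) by nra.
    assert (h3 := r3sq). assert (h3' := r3pos).
    assert (hm : (l - sqrt 3 * s)*(l + sqrt 3 * s) = 0).
    { replace ((l - sqrt 3 * s)*(l + sqrt 3 * s)) with (l^2 - (sqrt 3 * sqrt 3) * s^2) by ring.
      rewrite h3. lra. }
    apply Rmult_integral in hm. destruct hm; nra. }
  subst h l. subst al be ga.
  unfold perm3 in hp.
  repeat destruct hp as [hp|hp]; destruct hp as [? [? ?]]; subst x y z;
  rewrite ?(a90 s hs), ?(a60 s hs), ?(a30 s hs), ?(a90' s hs), ?(a60' s hs), ?(a30' s hs);
  first [apply pp1|apply pp2|apply pp3|apply pp4|apply pp5|apply pp6].
Qed.

Lemma rtri_type T : 0 < pdist (tA T) (tB T) -> 0 < pdist (tB T) (tC T) -> 0 < pdist (tC T) (tA T) ->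
  Rtri (pdist (tA T) (tB T)) (pdist (tB T) (tC T)) (pdist (tC T) (tA T)) -> is_type T 90 60 30.
Proof.
  intros ha hb hc hR. unfold is_type. split; [lra|]. split; [lra|].
  assert (sAC : pdist (tA T) (tC T) = pdist (tC T) (tA T)) by apply pdist_sym.
  assert (sBA : pdist (tB T) (tA T) = pdist (tA T) (tB T)) by apply pdist_sym.
  assert (sCB : pdist (tC T) (tB T) = pdist (tB T) (tC T)) by apply pdist_sym.
  eapply type_of; [| | | exact ha | exact hb | exact hc | exact hR].
  - unfold angA. rewrite angle_ang3; rewrite ?sAC, ?sBA, ?sCB; auto.
  - unfold angB. rewrite angle_ang3; rewrite ?sAC, ?sBA, ?sCB; auto.
  - unfold angC. rewrite angle_ang3; rewrite ?sAC, ?sBA, ?sCB; auto.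
Qed.


Lemma tri_pos T : 0 < Kf (pdist (tA T) (tB T)) (pdist (tB T) (tC T)) (pdist (tC T) (tA T)) /\
  0 < pdist (tA T) (tB T) /\ 0 < pdist (tB T) (tC T) /\ 0 < pdist (tC T) (tA T).
Proof.
  assert (hn := t_nondeg T). unfold collinear in hn.
  set (cr := (fst (tB T) - fst (tA T)) * (snd (tC T) - snd (tA T)) -
        (snd (tB T) - snd (tA T)) * (fst (tC T) - fst (tA T))) in hn.
  assert (hK : Kf (pdist (tA T) (tB T)) (pdist (tB T) (tC T)) (pdist (tC T) (tA T)) = 4*cr^2).
  { unfold Kf.
    replace (pdist (tA T) (tB T) ^ 4) with ((pdist (tA T) (tB T) ^ 2)^2) by ring.
    replace (pdist (tB T) (tC T) ^ 4) with ((pdist (tB T) (tC T) ^ 2)^2) by ring.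
    replace (pdist (tC T) (tA T) ^ 4) with ((pdist (tC T) (tA T) ^ 2)^2) by ring.
    rewrite !pdist_sq. unfold sqd, cr. ring. }
  assert (hK' : 0 < 4*cr^2) by (assert (cr <> 0) by auto; assert (0 < cr^2) by nra; lra).
  rewrite hK. split; [exact hK'|].
  rewrite <- hK in hK'.
  set (a := pdist (tA T) (tB T)) in *. set (b := pdist (tB T) (tC T)) in *. set (c := pdist (tC T) (tA T)) in *.
  assert (ha := pdist_nonneg (tA T) (tB T)). assert (hb := pdist_nonneg (tB T) (tC T)).
  assert (hc := pdist_nonneg (tC T) (tA T)). fold a b c in ha, hb, hc.
  split; [|split].
  - destruct (Rle_lt_or_eq_dec 0 a ha) as [h|h]; auto. rewrite <- h in hK'. exfalso.
    assert (Kf 0 b c = -(b^2-c^2)^2) by (unfold Kf; ring). assert (0 <= (b^2-c^2)^2) by apply pow2_ge_0. lra.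
  - destruct (Rle_lt_or_eq_dec 0 b hb) as [h|h]; auto. rewrite <- h in hK'. exfalso.
    assert (Kf a 0 c = -(a^2-c^2)^2) by (unfold Kf; ring). assert (0 <= (a^2-c^2)^2) by apply pow2_ge_0. lra.
  - destruct (Rle_lt_or_eq_dec 0 c hc) as [h|h]; auto. rewrite <- h in hK'. exfalso.
    assert (Kf a b 0 = -(a^2-b^2)^2) by (unfold Kf; ring). assert (0 <= (a^2-b^2)^2) by apply pow2_ge_0. lra.
Qed.

Theorem lemma2p6 (T : plane_triangle) :
  ~ is_type T 90 60 30 -> forbidden F32 T.
Proof.
  intros Hn.
  destruct (tri_pos T) as [hK [ha [hb hc]]].
  set (a := pdist (tA T) (tB T)) in *. set (b := pdist (tB T) (tC T)) in *. set (c := pdist (tC T) (tA T)) in *.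
  assert (hR : ~ Rtri a b c) by (intro H; apply Hn; apply rtri_type; auto).
  destruct (approx_core a b c ha hb hc hK hR) as [d0 [hd0 [hd01 Hc]]].
  set (M := a+b+c). set (m := min_side T).
  assert (hm : 0 < m) by (unfold m, min_side; repeat apply Rmin_pos; auto).
  assert (hM : 0 < M) by (unfold M; lra).
  exists (d0/(4*(M+1)*(m+1))). split.
  { apply Rlt_gt. apply Rdiv_lt_0_compat; [lra|]. apply Rmult_lt_0_compat; lra. }
  intros P _ _ [f [_ [_ He]]].
  set (e := d0/(4*(M+1)*(m+1)) * m).
  assert (he1 : 4*e*(M+1) = d0 * (m/(m+1))) by (unfold e; field; lra).
  assert (hmm : 0 <= m/(m+1) <= 1).
  { split. apply Rlt_le, Rdiv_lt_0_compat; lra.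
    apply (Rmult_le_reg_r (m+1)); [lra|]. unfold Rdiv. rewrite Rmult_assoc, Rinv_l by lra. lra. }
  assert (he : 0 <= e <= 1).
  { assert (0 <= 4*e*(M+1) <= d0) by (rewrite he1; split; nra). split; nra. }
  assert (hd : 0 <= 4*e*(M+1) <= d0) by (rewrite he1; split; nra).
  assert (aM : a <= M) by (unfold M; lra). assert (bM : b <= M) by (unfold M; lra).
  assert (cM : c <= M) by (unfold M; lra).
  assert (E0 := He 0%nat 1%nat 2%nat ltac:(simpl; auto)).
  assert (E1 := He 0%nat 3%nat 4%nat ltac:(simpl; auto)).
  assert (E2 := He 1%nat 3%nat 4%nat ltac:(simpl; auto)).
  assert (E3 := He 2%nat 3%nat 4%nat ltac:(simpl; auto)).
  destruct E0 as [_ [_ [_ [_ [_ [_ E0]]]]]].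
  destruct E1 as [_ [_ [_ [_ [_ [_ E1]]]]]].
  destruct E2 as [_ [_ [_ [_ [_ [_ E2]]]]]].
  destruct E3 as [_ [_ [_ [_ [_ [_ E3]]]]]].
  apply (epsc_close _ _ _ _ _ M he aM bM cM) in E0, E1, E2, E3.
  fold m e a b c in E0, E1, E2, E3.
  set (Yf := fun i => (fst (f 4%nat) - fst (f 3%nat))*(snd (f i) - snd (f 3%nat))
                     - (snd (f 4%nat) - snd (f 3%nat))*(fst (f i) - fst (f 3%nat))).
  apply (Hc (4*e*(M+1)) (sqd (f 3%nat) (f 4%nat))
    (sqd (f 0%nat) (f 3%nat)) (sqd (f 1%nat) (f 3%nat)) (sqd (f 2%nat) (f 3%nat))
    (sqd (f 4%nat) (f 0%nat)) (sqd (f 4%nat) (f 1%nat)) (sqd (f 4%nat) (f 2%nat))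
    (sqd (f 0%nat) (f 1%nat)) (sqd (f 1%nat) (f 2%nat)) (sqd (f 2%nat) (f 0%nat))
    (Yf 0%nat) (Yf 1%nat) (Yf 2%nat)); auto;
  try (unfold Yf, sqd; ring).
Qed.
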